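(* Let $n\ge2$ and let $X_1,\ldots,X_n$ be independent and identically distributed random vectors in $\mathbb{R}^n$ such that $X_1,\ldots,X_{n-1}$ are linearly independent almost surely. Let $$Y=\frac{\wedge(X_1,\ldots,X_{n-1})}{\|\wedge(X_1,\ldots,X_{n-1})\|_\infty}.$$ Then $Y\in\mathcal{C}_{n-1}(Y)$ almost surely.
   Context: The generalized cross product $\wedge:(\mathbb{R}^n)^{n-1}\to\mathbb{R}^n$ is the formal determinant of the $n\times n$ matrix whose first row is $(\mathbf e_1,\ldots,\mathbf e_n)$ (canonical basis vectors) and whose $(j+1)$-th row is $(x_j(1),\ldots,x_j(n))$; it vanishes iff $x_1,\ldots,x_{n-1}$ are linearly dependent. $\|v\|_\infty=\max_i|v(i)|$. For a random vector $Z$ in $\mathbb{R}^n$ and an integer $m\ge0$, the $m$-dimensional mould $\mathcal{C}_m(Z)$ is the set of all $z\in\mathbb{R}^n$ such that $\liminf_{\epsilon\to0^+}\mathbb{P}(\|Z-z\|_2<\epsilon)/\epsilon^m>0$. *)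

(* Defs.v *)
From HB Require Import structures.
From mathcomp Require Import all_boot all_order all_algebra.
From mathcomp Require Import all_classical all_reals all_analysis.
Set Implicit Arguments. Unset Strict Implicit. Unset Printing Implicit Defensive.
Import Order.TTheory GRing.Theory Num.Def Num.Theory.
Import numFieldNormedType.Exports.
Local Open Scope classical_set_scope.
Local Open Scope ring_scope.

Section Defs.
Variable R : realType.

(* Generalized cross product of m vectors (the rows of M) in R^(m+1):
   the formal determinant of the (m+1)x(m+1) matrix whose first row is
   (e_1, ..., e_(m+1)) and whose (j+1)-th row is the j-th row of M. *)
Definition gcross (m : nat) (M : 'M[R]_(m, m.+1)) : 'rV[R]_(m.+1) :=
  \row_(k < m.+1) \det (\matrix_(i < m.+1, j < m.+1)
      match unlift ord0 i with
      | None => (j == k)%:R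
      | Some i' => M i' j
      end).

Definition norm_inf (n : nat) (v : 'rV[R]_n) : R :=
  \big[Num.max/0]_(k < n) `|v ord0 k|.
Definition norm_2 (n : nat) (v : 'rV[R]_n) : R :=
  Num.sqrt (\sum_(k < n) v ord0 k ^+ 2).

Definition borel_Rn (n : nat) : set (set 'rV[R]_n) :=
  <<s [set (fun v : 'rV[R]_n => v ord0 j) @^-1` B
       | j in [set: 'I_n] & B in [set B : set R | measurable B]] >>.

Context {d : measure_display} {T : measurableType d}.

Definition random_vector (n : nat) (X : T -> 'rV[R]_n) : Prop :=
  forall B, borel_Rn B -> measurable (X @^-1` B).

Variable P : probability T R.

Definition independent_rv (I : finType) (n : nat) (X : I -> T -> 'rV[R]_n)
  : Prop :=
  forall B : I -> set 'rV[R]_n, (forall i, borel_Rn (B i)) ->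
    P (\bigcap_(i in [set: I]) (X i @^-1` B i)) =
    (\prod_(i : I) P (X i @^-1` B i))%E.

Definition identically_distributed (I : finType) (n : nat)
  (X : I -> T -> 'rV[R]_n) : Prop :=
  forall i j B, borel_Rn B -> P (X i @^-1` B) = P (X j @^-1` B).

Definition mould (n m : nat) (Z : T -> 'rV[R]_n) : set 'rV[R]_n :=
  [set z | (0 < limf_einf
      (fun eps : R => P [set w | (norm_2 (Z w - z) < eps)%R] * ((eps ^+ m)^-1)%:E)
      (0 : R)^'+)%E].

End Defs.

(* Main.v *)
Require Import Defs.
From HB Require Import structures.
From mathcomp Require Import all_boot all_order all_algebra.
From mathcomp Require Import all_classical all_reals all_analysis.
Import Order.TTheory GRing.Theory Num.Def Num.Theory.
Local Open Scope classical_set_scope.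
Local Open Scope ring_scope.
From mathcomp Require Import measurable_realfun.
Section Fib.
Context {d} {T : measurableType d}.
Definition mfib {K : finType} (f : T -> K) := forall a, measurable (f @^-1` [set a]).

Lemma mfib_pre (K : finType) (f : T -> K) (A : set K) : mfib f -> measurable (f @^-1` A).
Proof.
move=> mf; rewrite (_ : f @^-1` A = \bigcup_(k in A) f @^-1` [set k]).
  by apply: fin_bigcup_measurable => //; exact: finite_finset.
by apply/seteqP; split => [x Ax|x [k Ak /= ->]]//; exists (f x).
Qed.

Lemma mfib_comp (K L : finType) (f : T -> K) (h : K -> L) : mfib f -> mfib (fun w => h (f w)).
Proof. by move=> mf a; exact: (mfib_pre _ _ (h @^-1` [set a]) mf). Qed.

Lemma mfib_pair (K L : finType) (f : T -> K) (g : T -> L) :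
  mfib f -> mfib g -> mfib (fun w => (f w, g w)).
Proof.
move=> mf mg [a b]; rewrite (_ : _ @^-1` _ = f @^-1` [set a] `&` g @^-1` [set b]).
  exact: measurableI.
by apply/seteqP; split => [x /= [-> ->]|x /= [-> ->]].
Qed.

Lemma mfib_ffun (I K : finType) (f : I -> T -> K) :
  (forall i, mfib (f i)) -> mfib (fun w => [ffun i => f i w]).
Proof.
move=> mf phi.
rewrite (_ : _ @^-1` _ = ~` \bigcup_(i in [set: I]) ~` (f i @^-1` [set phi i])).
  apply: measurableC; apply: fin_bigcup_measurable; first exact: (@finite_finset I).
  by move=> i _; apply: measurableC; exact: mf.
apply/seteqP; split => [x /= <- [i _ /=]|x /= H]; first by rewrite ffunE.
apply/ffunP => i; rewrite ffunE; apply: contrapT => ne; apply: H; exists i => //.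
Qed.

Lemma mfib_bool (f : T -> bool) : measurable_fun setT f -> mfib f.
Proof. by move=> mf b; rewrite -(setTI (_ @^-1` _)); apply: mf. Qed.
End Fib.

Section Tree.
Context {d} {T : measurableType d} {R : realType} (P : probability T R).
Variables (G F : finType) (r : T -> G) (dg : nat -> T -> F).
Hypothesis mr : mfib r.
Hypothesis md : forall i, mfib (dg i).
Hypothesis F0 : (0 < #|F|)%N.

Definition cell j w := [set w' | r w' = r w /\ forall i, (i < j)%N -> dg i w' = dg i w].

Lemma cellS j w : cell j.+1 w = cell j w `&` dg j @^-1` [set dg j w].
Proof.
apply/seteqP; split => [x [rx dx]|x [[rx dx] /= dj]].
  by split; [split=> // i ij; apply: dx; exact: ltnW | exact: dx].
split => // i; rewrite ltnS leq_eqVlt => /orP[/eqP->//|]; exact: dx.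
Qed.

Lemma mcell j w : measurable (cell j w).
Proof.
elim: j => [|j ih].
  rewrite (_ : cell 0 w = r @^-1` [set r w]); first exact: mr.
  by apply/seteqP; split => [x []|x /= rx]; [|split].

by rewrite cellS; apply: measurableI => //; apply: md.
Qed.

Lemma cell_self j w : cell j w w. Proof. by split. Qed.

Lemma cell_eq j w w' : cell j w w' -> cell j w' = cell j w.
Proof.
move=> [rw dw]; apply/seteqP; split => [x [rx dx]|x [rx dx]]; split.
- by rewrite rx.
- by move=> i ij; rewrite dx // dw.
- by rewrite rx.
- by move=> i ij; rewrite dx // dw.
Qed.

Definition key j w := (r w, [ffun i : 'I_j => dg i w]).
Lemma mkey j : mfib (key j).
Proof. apply: mfib_pair => //; apply: (@mfib_ffun _ _ (ordinal j) F (fun i w => dg i w)) => i; exact: md. Qed.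

Lemma cell_key j w : cell j w = key j @^-1` [set key j w].
Proof.
apply/seteqP; split => [x [rx dx]|x /= kx].
  by rewrite /= /key rx; congr pair; apply/ffunP => i; rewrite !ffunE dx.
have rx : r x = r w := congr1 fst kx.
have /ffunP dx := congr1 snd kx.
by split => // i ij; have := dx (Ordinal ij); rewrite !ffunE.
Qed.

Definition v j : R := ((#|F|%:R)^-1) ^+ j.

Lemma v_ge0 j : 0 <= v j.
Proof. by rewrite /v exprn_ge0 // invr_ge0. Qed.

Lemma vS j : v j.+1 *+ #|F| = v j.
Proof.
rewrite /v exprS -[_ *+ #|F|]mulr_natl mulrA mulfV ?mul1r //.
by rewrite pnatr_eq0 -lt0n.
Qed.

Definition light t j := [set w | (P (cell j w) < (t * v j)%:E)%E].

Lemma mlight t j : measurable (light t j).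
Proof.
rewrite (_ : light t j = key j @^-1` [set k | exists w, key j w = k /\ light t j w]).
  exact: mfib_pre _ _ _ (mkey j).
apply/seteqP; split => [x lx|x /= [w [kw lw]]]; first by exists x.
rewrite /light /= (cell_key j x) -kw -cell_key; exact: lw.
Qed.

Definition E t j L := [set w | exists i, (j <= i <= j + L)%N /\ light t i w].
Lemma mE t j L : measurable (E t j L).
Proof.
rewrite (_ : E t j L = \bigcup_(i in [set i | (j <= i <= j + L)%N]) light t i).
  by apply: bigcup_measurable => i _; exact: mlight.
by apply/seteqP; split => [x [i [hi li]]|x [i hi li]]; exists i.
Qed.

Lemma union_bound (K : finType) (f : T -> K) (A : set T) (b : \bar R) :
  mfib f -> measurable A -> (forall k, P (A `&` f @^-1` [set k]) <= b)%E ->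
  (P A <= b *+ #|K|)%E.
Proof.
move=> mf mA hb.
have mB : forall i : 'I_#|K|, measurable (A `&` f @^-1` [set enum_val i]).
  by move=> i; apply: measurableI => //; exact: mf.
have sub : A `<=` \big[setU/set0]_(i < #|K|) (A `&` f @^-1` [set enum_val i]).
  move=> x Ax; rewrite (bigD1 (enum_rank (f x))) //=; left; split => //.
  by rewrite /= enum_rankK.
apply: (le_trans (le_measure _ _ _ sub)); rewrite ?inE //.
  by apply: bigsetU_measurable => i _; exact: mB.
rewrite measure_bigsetU_ord //.
  apply: le_trans; first by apply: lee_sum => i _; exact: (hb (enum_val i)).
  by rewrite sumr_const card_ord.
move=> i j _ _ [x [[_ /= ei] [_ /= ej]]]; apply: enum_val_inj.
by rewrite -ei -ej.
Qed.

Lemma tree t (t0 : 0 <= t) L : forall j w0, (P (cell j w0 `&` E t j L) <= (t * v j)%:E)%E.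
Proof.
elim: L => [|L ih] j w0.
  have [lw|nlw] := ltP (P (cell j w0)) (t * v j)%:E.
    apply: le_trans (ltW lw); apply: le_measure; rewrite ?inE.
    - by apply: measurableI; [exact: mcell|exact: mE].
    - exact: mcell.
    - exact: subIsetl.
  rewrite (_ : _ `&` _ = set0) ?measure0 ?lee_fin ?mulr_ge0 ?v_ge0 //.
  apply/seteqP; split => // x [cx [i [hi li]]].
  have ij : i = j by apply/eqP; rewrite eqn_leq; move: hi; rewrite addn0 => /andP[-> ->].
  move: li; rewrite /light /= ij (cell_eq _ _ _ cx) => li'.
  by have := lt_le_trans li' nlw; rewrite ltxx.
have [lw|nlw] := ltP (P (cell j w0)) (t * v j)%:E.
  apply: le_trans (ltW lw); apply: le_measure; rewrite ?inE.
  - by apply: measurableI; [exact: mcell|exact: mE].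
  - exact: mcell.
  - exact: subIsetl.
rewrite -vS mulrnAr EFin_natmul.
apply: (union_bound _ _ _ _ (md j)).
  by apply: measurableI; [exact: mcell|exact: mE].
move=> k.
have [[w1 [c1 e1]]|nex] := pselect (exists w1, cell j w0 w1 /\ dg j w1 = k).
  apply: le_trans (ih j.+1 w1); apply: le_measure; rewrite ?inE.
  - apply: measurableI; last exact: md.
    by apply: measurableI; [exact: mcell|exact: mE].
  - by apply: measurableI; [exact: mcell|exact: mE].
  move=> x [[cx [i [hi li]]] /= ex]; split.
    rewrite cellS; split; last by rewrite /= ex e1.
    by rewrite (cell_eq _ _ _ c1).
  exists i; split => //.
  have ij : i != j.
    apply/eqP => ij; move: li; rewrite /light /= ij (cell_eq _ _ _ cx) => li'.
    by have := lt_le_trans li' nlw; rewrite ltxx.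
  move: hi ij; rewrite addSnnS; case/andP => h1 h2 h3; rewrite h2 andbT.
  by rewrite ltn_neqAle eq_sym h3.
rewrite (_ : _ `&` _ = set0) ?measure0 ?lee_fin ?mulr_ge0 ?v_ge0 //.
apply/seteqP; split => // x [[cx _] /= ex]; apply: nex; exists x; split => //.
Qed.


Definition Eall t := [set w | exists i, light t i w].

Lemma mEall t : measurable (Eall t).
Proof.
rewrite (_ : Eall t = \bigcup_i light t i); first by apply: bigcupT_measurable => i; exact: mlight.
by apply/seteqP; split => [x [i li]|x [i _ li]]; exists i.
Qed.

Lemma PE0 t (t0 : 0 <= t) L : (P (E t 0 L) <= (t%:E) *+ #|G|)%E.
Proof.
apply: (union_bound _ _ _ _ mr); first exact: mE.
move=> g.
have [[w1 e1]|nex] := pselect (exists w1, r w1 = g).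
  have := tree t t0 L 0 w1; rewrite /v expr0 mulr1 => h; apply: le_trans h.
  apply: le_measure; rewrite ?inE.
  - by apply: measurableI; [exact: mE|exact: mr].
  - by apply: measurableI; [exact: mcell|exact: mE].
  by move=> x [Ex /= rx]; split => //; split => //; rewrite rx e1.
rewrite (_ : _ `&` _ = set0) ?measure0 ?lee_fin //.
by apply/seteqP; split => // x [_ /= rx]; apply: nex; exists x.
Qed.

Lemma PEall t (t0 : 0 <= t) : (P (Eall t) <= (t%:E) *+ #|G|)%E.
Proof.
have EE : Eall t = \bigcup_L E t 0 L.
  apply/seteqP; split => [x [i li]|x [L _ [i [hi li]]]]; last by exists i.
  by exists i => //; exists i; split => //; rewrite add0n leqnn.
have mU : measurable (\bigcup_L E t 0 L) by rewrite -EE; exact: mEall.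
have hom : {homo (E t 0) : n m / (n <= m)%N >-> (n <= m)%O}.
  move=> n1 n2 n12; apply/subsetPset => x [i [hi li]]; exists i; split => //.
  by move: hi; rewrite !add0n => /andP[_ h]; rewrite (leq_trans h n12).
have cv := @nondecreasing_cvg_mu _ _ _ P _ (fun L => mE t 0 L) mU hom.
rewrite EE -(cvg_lim _ cv) //; apply: lime_le; first by apply/cvg_ex; eexists; exact: cv.
by apply: nearW => L; exact: PE0.
Qed.

Lemma tree_ae : exists N, [/\ measurable N, P N = 0%E &
  forall w, ~ N w -> exists2 c : R, 0 < c & forall j, ((c * v j)%:E <= P (cell j w))%E].
Proof.
pose t k : R := (k.+1%:R)^-1.
have t0 k : 0 < t k by rewrite /t invr_gt0.
exists (\bigcap_k Eall (t k)); split.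
- by apply: bigcapT_measurable => k; exact: mEall.
- apply/eqP; rewrite eq_le measure_ge0 andbT; apply/lee_addgt0Pr => e e0.
  rewrite add0e.
  have bP := @archi_boundP R (#|G|%:R / e) (divr_ge0 (ler0n _ _) (ltW e0)).
  set k := archi_bound _ in bP.
  apply: (@le_trans _ _ (P (Eall (t k)))).
    apply: le_measure; rewrite ?inE.
    + by apply: bigcapT_measurable => k'; exact: mEall.
    + exact: mEall.
    + by move=> x; apply.

  apply: (le_trans (PEall _ (ltW (t0 k)))); rewrite -EFin_natmul lee_fin.
  rewrite /t -[_ *+ #|G|]mulr_natr mulrC ler_pdivrMr ?ltr0n //.
  rewrite ltr_pdivrMr // in bP; apply: (ltW (lt_le_trans bP _)).
  by rewrite mulrC ler_pM2l // ler_nat.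
- move=> w Nw; have [k nk] : exists k, ~ Eall (t k) w.
    by apply: contrapT => hh; apply: Nw => k _; apply: contrapT => hk; apply: hh; exists k.
  exists (t k) => // j; rewrite leNgt; apply/negP => lj; apply: nk; exists j; exact: lj.
Qed.

End Tree.
From mathcomp Require Import ring lra.

Section Bits.
Context {R : realType}.
Definition hh (l : nat) : R := (2^-1) ^+ l.

Fixpoint aa (l : nat) (u : R) : R :=
  if l is l'.+1 then aa l' u + (if aa l' u + hh l'.+1 <= u then hh l'.+1 else 0) else 0.
Definition bit l (u : R) := aa l u + hh l.+1 <= u.

Lemma hh_gt0 l : 0 < hh l.
Proof. by rewrite /hh exprn_gt0 // invr_gt0. Qed.

Lemma hhS l : hh l = hh l.+1 + hh l.+1.
Proof. by rewrite /hh exprS; field. Qed.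

Lemma aa_inv l u : 0 <= u < 1 -> aa l u <= u < aa l u + hh l.
Proof.
move=> /andP[u0 u1]; elim: l => [|l /andP[ih1 ih2]] /=.
  by rewrite /hh expr0 add0r u0 u1.
have := hhS l; have := hh_gt0 l.+1.
case: ifP => hb; rewrite ?addr0.
  by move=> _ e; apply/andP; split => //; move: ih2; rewrite e; lra.
by move=> _ e; apply/andP; split => //; move/negbT: hb; rewrite -ltNge.
Qed.

Lemma aa_eq l u u' : (forall i, (i < l)%N -> bit i u = bit i u') -> aa l u = aa l u'.
Proof.
elim: l => [//|l ih] hb /=.
have e : aa l u = aa l u' by apply: ih => i il; apply: hb; exact: ltnW.
have := hb l (ltnSn l); rewrite /bit e => ->; done.
Qed.

Lemma bits_close l u u' : 0 <= u < 1 -> 0 <= u' < 1 ->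
  (forall i, (i < l)%N -> bit i u = bit i u') -> `|u - u'| < hh l.
Proof.
move=> hu hu' hb; have := aa_inv l _ hu; have := aa_inv l _ hu'.
rewrite (aa_eq _ _ _ hb) => /andP[a1 a2] /andP[a3 a4].
rewrite ltr_norml; apply/andP; split; lra.
Qed.

Lemma maa d (T : measurableType d) l (f : T -> R) : measurable_fun setT f ->
  measurable_fun setT (fun w => aa l (f w)).
Proof.
move=> mf; elim: l => [|l ih] /=; first exact: measurable_cst.
apply: measurable_funD => //.
apply: measurable_fun_if => //.
apply: measurable_fun_ler => //; apply: measurable_funD => //.
Qed.

Lemma mbit d (T : measurableType d) l (f : T -> R) : measurable_fun setT f ->
  measurable_fun setT (fun w => bit l (f w)).
Proof.
move=> mf; apply: measurable_fun_ler => //.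
apply: measurable_funD; [exact: maa | exact: measurable_cst].
Qed.
End Bits.

Section Geo.
Context {d} {T : measurableType d} {R : realType} (P : probability T R) (m : nat).
Variable Y : T -> 'rV[R]_m.+1.
Hypothesis mY : forall p, measurable_fun setT (fun w => Y w ord0 p).
Hypothesis Ymax : forall w i, (forall p, `|Y w ord0 p| <= `|Y w ord0 i|) ->
  Y w ord0 i != 0 -> `|Y w ord0 i| = 1.

Local Notation yc w p := (Y w ord0 p).

Definition cmpY w : {ffun 'I_m.+1 * 'I_m.+1 -> bool} :=
  [ffun ij => `|yc w ij.1| <= `|yc w ij.2|].
Definition pk (c : {ffun 'I_m.+1 * 'I_m.+1 -> bool}) : 'I_m.+1 :=
  odflt ord0 [pick i | [forall j, c (j, i)]].
Definition kk w := pk (cmpY w).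

Lemma kk_max w p : `|yc w p| <= `|yc w (kk w)|.
Proof.
rewrite /kk /pk; case: pickP => [i /forallP H | none] /=.
  by have := H p; rewrite ffunE.
exfalso.
have := @arg_maxP _ _ _ ord0 xpredT (fun i => `|yc w i|) isT; case => i _ Hi.
have := none i; move/negP; apply; apply/forallP => j; rewrite ffunE; exact: Hi.
Qed.

Lemma ymax w : `|yc w (kk w)| <= 1.
Proof.
have [->|nz] := eqVneq (yc w (kk w)) 0; first by rewrite normr0.
by rewrite (Ymax _ _ (kk_max w) nz).
Qed.

Lemma ybound w p : `|yc w p| <= 1.
Proof. exact: le_trans (kk_max w p) (ymax w). Qed.

Definition sgnY w : {ffun 'I_m.+1 -> bool} := [ffun p => 0 <= yc w p].
Definition zerY w : {ffun 'I_m.+1 -> bool} := [ffun p => yc w p == 0].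
Definition root w := (cmpY w, sgnY w, zerY w).
Definition uu w p := (yc w p + 1) / 3.
Definition digit (x : {ffun 'I_m.+1 * 'I_m.+1 -> bool} * {ffun 'I_m.+1 -> bool})
  : {ffun 'I_m -> bool} := [ffun i => x.2 (lift (pk x.1) i)].
Definition dg l w := digit (cmpY w, [ffun p => bit l (uu w p)]).

Lemma muu p : measurable_fun setT (fun w => uu w p).
Proof.
rewrite /uu; apply: measurable_funM => //; apply: measurable_funD => //.
Qed.

Lemma mcmp : mfib cmpY.
Proof.
apply: (@mfib_ffun _ _ _ _ (fun ij w => `|yc w ij.1| <= `|yc w ij.2|)) => ij.
apply: mfib_bool; apply: measurable_fun_ler; apply: measurableT_comp => //.
Qed.

Lemma mroot : mfib root.
Proof.
apply: mfib_pair; first apply: mfib_pair.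
- exact: mcmp.
- apply: (@mfib_ffun _ _ _ _ (fun p w => 0 <= yc w p)) => p.
  by apply: mfib_bool; apply: measurable_fun_ler.
- apply: (@mfib_ffun _ _ _ _ (fun p w => yc w p == 0)) => p.
  by apply: mfib_bool; apply: measurable_fun_eqr.
Qed.

Lemma mdg l : mfib (dg l).
Proof.
apply: (mfib_comp _ _ _ digit); apply: mfib_pair; first exact: mcmp.
apply: (@mfib_ffun _ _ _ _ (fun p w => bit l (uu w p))) => p.
by apply: mfib_bool; apply: mbit; exact: muu.
Qed.

Lemma uu_range w p : 0 <= uu w p < 1.
Proof.
have := ybound w p; rewrite ler_norml => /andP[h1 h2].
rewrite /uu; apply/andP; split; lra.
Qed.

Lemma sgn_eq (x y : R) : `|x| = 1 -> `|y| = 1 -> (0 <= x) = (0 <= y) -> x = y.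
Proof.
move=> nx ny e; have [x0|x0] := leP 0 x.
  have y0 : 0 <= y by rewrite -e.
  by rewrite -(ger0_norm x0) -(ger0_norm y0) nx ny.
have y0 : y < 0 by rewrite ltNge -e -ltNge.
by rewrite -(opprK x) -(opprK y) -(ltr0_norm x0) -(ltr0_norm y0) nx ny.
Qed.

Lemma close j w w' : cell _ _ root dg j w w' -> forall p, `|yc w' p - yc w p| <= 3 * hh j.
Proof.
move=> [rw dw] p.
have ecmp : cmpY w' = cmpY w := congr1 (fun x => x.1.1) rw.
have /ffunP esgn := congr1 (fun x => x.1.2) rw.
have /ffunP ezer := congr1 snd rw.
have ek : kk w' = kk w by rewrite /kk ecmp.
have h3 : 0 <= 3 * hh j :> R by apply: mulr_ge0 => //; exact: ltW (hh_gt0 j).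
case: (unliftP (kk w) p) => [i ->|->].
  have hb : forall l, (l < j)%N ->
      bit l (uu w' (lift (kk w) i)) = bit l (uu w (lift (kk w) i)).
    move=> l lj; have := dw l lj; rewrite /dg /digit => /ffunP/(_ i).
    by rewrite !ffunE /= ecmp.
  have := bits_close _ _ _ (uu_range w' _) (uu_range w _) hb.
  have -> : yc w' (lift (kk w) i) - yc w (lift (kk w) i) =
     3 * (uu w' (lift (kk w) i) - uu w (lift (kk w) i)) by rewrite /uu; field.
  by rewrite normrM ger0_norm // => h; rewrite ler_pM2l // ltW.
suff -> : yc w' (kk w) = yc w (kk w) by rewrite subrr normr0.
have zz := ezer (kk w); rewrite !ffunE in zz.
have [z|nz] := eqVneq (yc w (kk w)) 0.
  by rewrite z; apply/eqP; rewrite zz z.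
have nz' : yc w' (kk w) != 0 by rewrite zz.
apply: sgn_eq.
- by rewrite -ek; apply: (Ymax _ _ (kk_max w')); rewrite ek.
- exact: Ymax _ _ (kk_max w) nz.
- by have := esgn (kk w); rewrite !ffunE.
Qed.

Lemma cell_ball j w eps : m.+1%:R * 3 * hh j < eps ->
  cell _ _ root dg j w `<=` [set w' | norm_2 (Y w' - Y w) < eps].
Proof.
move=> he w' cw; rewrite /= /norm_2.
have h0 : 0 <= 3 * hh j :> R by apply: mulr_ge0 => //; exact: ltW (hh_gt0 j).
have e0 : 0 < eps by apply: le_lt_trans he; apply: mulr_ge0 => //; exact: ltW (hh_gt0 j).
rewrite -(ger0_norm (ltW e0)) -sqrtr_sqr ltr_sqrt ?exprn_gt0 //.
apply: (@le_lt_trans _ _ (\sum_(k < m.+1) (3 * hh j)^+2)).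
  apply: ler_sum => k _; rewrite !mxE -real_normK ?num_real // !expr2.
  by apply: ler_pM => //; exact: close.
rewrite sumr_const card_ord -[_ *+ m.+1]mulr_natl.
rewrite -mulrA in he.
have N1 : 1 <= m.+1%:R :> R by rewrite ler1n.
move: (3 * hh j) h0 he => a a0 he.
move: (m.+1%:R : R) N1 he => N N1 he.
have h1 : N * a ^+ 2 <= (N * a) ^+ 2.
  have hN : N <= N ^+ 2 by rewrite expr2; nra.
  by rewrite exprMn; apply: ler_wpM2r => //; exact: exprn_ge0.
apply: (le_lt_trans h1); rewrite ltr_pXn2r //; last by rewrite nnegrE ltW.
by rewrite nnegrE mulr_ge0 // (le_trans ler01 N1).
Qed.

Lemma mball (z : 'rV[R]_m.+1) eps : 0 < eps ->
  measurable [set w | norm_2 (Y w - z) < eps].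
Proof.
move=> e0.
rewrite (_ : [set w | _] = (fun w => \sum_(k < m.+1) (yc w k - z ord0 k) ^+ 2 < eps ^+ 2)
   @^-1` [set true]).
  apply: mfib_bool; apply: measurable_fun_ltr => //.
  apply: measurable_sum => k; apply: measurable_funX; apply: measurable_funB => //.
have key w : (norm_2 (Y w - z) < eps) =
    (\sum_(k < m.+1) (yc w k - z ord0 k) ^+ 2 < eps ^+ 2).
  rewrite /norm_2 -{1}(ger0_norm (ltW e0)) -sqrtr_sqr ltr_sqrt ?exprn_gt0 //.
  by congr (_ < _); apply: eq_bigr => k _; rewrite !mxE.
by apply/seteqP; split => w /=; rewrite key.
Qed.


Lemma geo_ae : {ae P, forall w, mould P m Y (Y w)}.
Proof.
have F0 : (0 < #|{ffun 'I_m -> bool}|)%N by rewrite card_ffun card_bool card_ord expn_gt0.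
have [N [mN PN0 HN]] := tree_ae P _ _ _ _ mroot mdg F0.
exists N; split => // w /= nQ; apply: contrapT => nNw; apply: nQ.
have [c c0 hc] := HN w nNw.
pose K : R := m.+1%:R * 3.
have K0 : 0 < K by rewrite /K mulr_gt0 // ltr0n.
pose c' := c / (2 * K) ^+ m.
have c'0 : 0 < c' by rewrite /c' divr_gt0 // exprn_gt0 // mulr_gt0.
rewrite /mould /= limf_einfE.
apply: (@lt_le_trans _ _ c'%:E); first by rewrite lte_fin.
apply: le_ereal_sup_tmp.
pose V := [set x : R | 0 < x < K].
have FV : (0:R)^'+ V.
  near=> x; rewrite /V /=; apply/andP; split; near: x;
    [exact: nbhs_right_gt| exact: nbhs_right_lt].
eexists; first by exists V.
apply: le_ereal_inf_tmp => _ [eps /andP[e0 eK] <-].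
have ex : exists j, K * hh j < eps.
  have bP := @archi_boundP R (K / eps) (divr_ge0 (ltW K0) (ltW e0)).
  exists (archi_bound (K / eps)).
  move: bP; set k := archi_bound _ => bP.
  rewrite ltr_pdivrMr // in bP.
  have hk : hh k = ((2 ^ k)%N%:R)^-1 :> R by rewrite /hh natrX exprVn.
  rewrite hk ltr_pdivrMr ?ltr0n ?expn_gt0 //.
  apply: (lt_le_trans bP); rewrite mulrC ler_pM2l // ler_nat.
  exact: ltnW (ltn_expl k (ltnSn 1)).
case: (ex_minnP ex) => j hj jmin.
have hj2 : eps / (2 * K) <= hh j.
  move: hj jmin; case: j => [|j] hj jmin.
    by rewrite /hh expr0 ler_pdivrMr ?mulr_gt0 // mul1r; lra.
  have nh : ~~ (K * hh j < eps) by apply/negP => h; have := jmin _ h; rewrite ltnn.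
  rewrite -leNgt in nh.
  rewrite ler_pdivrMr ?mulr_gt0 //; apply: (le_trans nh); rewrite (hhS j).
  by have -> : K * (hh j.+1 + hh j.+1) = hh j.+1 * (2 * K) by ring.
have mb := mball (Y w) eps e0.
have hP : (P (cell _ _ root dg j w) <= P [set w' | (norm_2 (Y w' - Y w) < eps)%R])%E.
  apply: le_measure; rewrite ?inE //; first exact: mcell _ _ _ _ mroot mdg j w.
  exact: cell_ball.
apply: (@le_trans _ _ ((c * v {ffun 'I_m -> bool} j)%:E * ((eps ^+ m)^-1)%:E)%E); last first.
  apply: lee_wpmul2r; first by rewrite lee_fin invr_ge0 exprn_ge0 // ltW.
  exact: le_trans (hc j) hP.
rewrite -EFinM lee_fin.
have vj : v {ffun 'I_m -> bool} j = hh j ^+ m :> R.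
  by rewrite /v card_ffun card_bool card_ord natrX exprVn -exprM mulnC exprM /hh !exprVn.
rewrite vj.
have e1 : c' = c * (eps / (2 * K)) ^+ m * (eps ^+ m)^-1.
  rewrite /c' expr_div_n.
  have A0 : eps ^+ m != 0 by rewrite expf_neq0 // gt_eqF.
  have B0 : (2 * K) ^+ m != 0 by rewrite expf_neq0 // gt_eqF // mulr_gt0.
  move: (eps ^+ m) ((2 * K) ^+ m) A0 B0 => A B A0 B0.
  by field; rewrite A0 B0.
rewrite e1 ler_wpM2r ?invr_ge0 ?exprn_ge0 ?(ltW e0) // ler_wpM2l ?(ltW c0) //.
by apply: lerXn2r => //; rewrite nnegrE ?divr_ge0 ?mulr_ge0 ?(ltW e0) ?(ltW K0) ?(ltW (hh_gt0 j)).
Unshelve. all: by end_near. Qed.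

End Geo.

Lemma inv_meas (R : realType) : measurable_fun setT (@GRing.inv R).
Proof.
have -> : [set: R] = [set x | x != 0] `|` [set 0].
  apply/seteqP; split => x // _; have [->|nz] := eqVneq x 0; [by right|by left].
have mD : measurable [set x : R | x != 0] by apply: open_measurable; exact: open_neq.
have mE : measurable [set (0:R)] by exact: measurable_set1.
apply/(measurable_funU _ mD mE); split; last exact: measurable_fun_set1.
apply: open_continuous_measurable_fun; first exact: open_neq.
move=> x; rewrite inE /= => nz; exact: inv_continuous.
Qed.

Lemma measurable_bigmax {d} {T : measurableType d} {R : realType} (I : Type) (s : seq I)
  (f : I -> T -> R) :
  (forall i, measurable_fun setT (f i)) ->
  measurable_fun setT (fun w => \big[Num.max/0]_(i <- s) f i w).
Proof.
move=> mf; elim: s => [|a s ih].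
  by under eq_fun do rewrite big_nil; exact: measurable_cst.
by under eq_fun do rewrite big_cons; exact: measurable_maxr.
Qed.

(* n = m.+1 with m >= 1, i.e. n >= 2; X_1..X_n are X 0 .. X m *)
Theorem mainTheorem8 (R : realType) (d : measure_display)
  (T : measurableType d) (P : probability T R) (m : nat) (hm : (1 <= m)%N)
  (X : 'I_m.+1 -> T -> 'rV[R]_m.+1)
  (Xrv : forall i, random_vector (X i))
  (Xind : independent_rv P X)
  (Xid : identically_distributed P X)
  (Xli : {ae P, forall w,
     row_free (\matrix_(i < m) X (widen_ord (leqnSn m) i) w)}) :
  let W := fun w => gcross (\matrix_(i < m) X (widen_ord (leqnSn m) i) w) in
  let Y := fun w => (norm_inf (W w))^-1 *: W w in
  {ae P, forall w, mould P m Y (Y w)}.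
Proof.
move=> W Y.
have mX : forall i j, measurable_fun setT (fun w => X i w ord0 j).
  move=> i j _ B mB; rewrite setTI.
  apply: (Xrv i ((fun v : 'rV[R]_m.+1 => v ord0 j) @^-1` B)); apply: sub_gen_smallest.
  by exists j => //; exists B.
have mW : forall p, measurable_fun setT (fun w => W w ord0 p).
  move=> p; rewrite /W /gcross.
  under eq_fun do rewrite mxE /determinant.
  apply: measurable_sum => s; apply: measurable_funM => //.
  apply: measurable_prod => i _.
  under eq_fun do rewrite mxE.
  case: (unlift ord0 i) => [i'|]; last exact: measurable_cst.
  under eq_fun do rewrite mxE.
  exact: mX.
have mN : measurable_fun setT (fun w => norm_inf (W w)).
  rewrite /norm_inf; apply: measurable_bigmax => k.
  by apply: measurableT_comp => //; exact: mW.
have mY : forall p, measurable_fun setT (fun w => Y w ord0 p).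
  move=> p; rewrite /Y; under eq_fun do rewrite mxE.
  apply: measurable_funM => //; apply: measurableT_comp => //; exact: inv_meas.
have Ymax : forall w i, (forall p, `|Y w ord0 p| <= `|Y w ord0 i|) ->
    Y w ord0 i != 0 -> `|Y w ord0 i| = 1.
  move=> w i hmax nz.
  set M := norm_inf (W w).
  have YE p : Y w ord0 p = M^-1 * W w ord0 p by rewrite /Y mxE.
  have M0 : M != 0 by apply: contraNneq nz => M0; rewrite YE M0 invr0 mul0r.
  have Mge : 0 <= M.
    apply: le_trans (normr_ge0 (W w ord0 ord0)) _.
    exact: (le_bigmax _ (fun k : 'I_m.+1 => `|W w ord0 k|) ord0).
  have Mpos : 0 < M by rewrite lt_def M0.
  have hW p : `|W w ord0 p| <= `|W w ord0 i|.
    by have := hmax p; rewrite !YE !normrM ler_pM2l // normr_gt0 invr_eq0.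
  have e : M = `|W w ord0 i|.
    apply/eqP; rewrite eq_le; apply/andP; split.
    - by apply: bigmax_le => // k _; exact: hW.
    - exact: (le_bigmax _ (fun k : 'I_m.+1 => `|W w ord0 k|) i).
  by rewrite YE normrM -e ger0_norm ?invr_ge0 // mulVf.
exact: (geo_ae P m Y mY Ymax).
Qed.
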